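(* Let $t_j^i=\binom{i}{j}$ for $0\le j\le i$, and let $h_{j,k}^i$ ($0\le k\le i$, $0\le j\le i-k$) be defined by $h_{j,0}^i=t_j^i$ and $h_{j,k}^i=h_{j,k-1}^{i-1}+h_{j,k-1}^{i}+h_{j+1,k-1}^{i}$ for $k\ge 1$. Then for any $0\leq k \leq i$, $0\leq j \leq i-k$, $$h_{j,k}^i=\sum_{\ell=0}^{k}\binom{2\ell+i-k}{\ell+j}\binom{k}{\ell}.$$ *)

(* Defs.v *)
From mathcomp Require Import all_boot.
Set Implicit Arguments. Unset Strict Implicit. Unset Printing Implicit Defensive.

Definition t (i j : nat) : nat := 'C(i, j).

(* h i j k = h^i_{j,k}; defined by recursion on k.  The recursion only ever
   refers to in-range indices when (k <= i, j <= i - k); outside that range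
   the values are irrelevant. *)
Fixpoint h (i j k : nat) {struct k} : nat :=
  match k with
  | 0 => t i j
  | k'.+1 => h i.-1 j k' + h i j k' + h i j.+1 k'
  end.

(* Main.v *)
Require Import Defs.
From mathcomp Require Import all_boot.
From mathcomp Require Import zify.

Definition F (n j k : nat) := \sum_(0 <= l < k.+1) 'C(2 * l + n, l + j) * 'C(k, l).

Lemma Frec n j k : F n j k.+1 = F n j k + F n.+1 j k + F n.+1 j.+1 k.
Proof.
rewrite /F big_nat_recl // bin0 muln1.
have E : forall l, 'C(2 * l.+1 + n, l.+1 + j) * 'C(k.+1, l.+1) =
   'C(2 * l.+1 + n, l.+1 + j) * 'C(k, l.+1) +
   ('C(2 * l + n.+1, l + j) * 'C(k, l) + 'C(2 * l + n.+1, l + j.+1) * 'C(k, l)).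
  move=> l; rewrite binS mulnDr; congr (_ + _).
  rewrite -mulnDl; congr (_ * _).
  have -> : 2 * l.+1 + n = (2 * l + n.+1).+1 by rewrite mulnS; lia.
  rewrite addSn binS addnS addnC.
by rewrite addnS.
rewrite (eq_bigr _ (fun l _ => E l)).
have H : 'C(2 * 0 + n, 0 + j) + \sum_(0 <= l < k.+1) 'C(2 * l.+1 + n, l.+1 + j) * 'C(k, l.+1)
   = \sum_(0 <= l < k.+1) 'C(2 * l + n, l + j) * 'C(k, l).
  rewrite [in RHS]big_nat_recl // bin0 muln1.
  rewrite big_nat_recr //=.
  by rewrite (bin_small (ltnSn k)) !muln0 !addn0.
rewrite big_split /= big_split /= -H.
by rewrite !addnA.
Qed.

Lemma main k : forall i j, k <= i -> h i j k = F (i - k) j k.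
Proof.
elim: k => [|k IH] i j hk.
  by rewrite /= /F big_nat1 /t subn0 bin0 muln1.
rewrite /= !IH; try lia.
rewrite Frec.
have -> : i.-1 - k = i - k.+1 by lia.
have -> : i - k = (i - k.+1).+1 by lia.
by [].
all: lia.
Qed.

Theorem theorem9 (i j k : nat) (hk : k <= i) (hj : j <= i - k) :
  h i j k = \sum_(0 <= l < k.+1) 'C(2 * l + (i - k), l + j) * 'C(k, l).
Proof. exact: main. Qed.
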